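(* Let $I$ be an open interval with $a=\inf I$, $S$ a nonempty set, and $V$ a subgroup of $\mathrm{Homeo}^+(I)$ that acts freely on $I$. Suppose $F:I\to S$ satisfies $F=F\circ\psi$ for some non-identity $\psi\in V$. Then for every $\varphi\in V$: if there is $t\in I$ with $F(x)=F(\varphi(x))$ for all $x\in(a,t)$, then $F=F\circ\varphi$ on all of $I$.
   Context: $\mathrm{Homeo}^+(I)$ is the group of increasing homeomorphisms of $I$; $V$ acts freely on $I$ if no non-identity element of $V$ has a fixed point in $I$. *)

(* Defs.v *)
From HB Require Import structures.
From mathcomp Require Import all_boot all_order all_algebra.
From mathcomp Require Import all_classical all_reals all_analysis.
Set Implicit Arguments. Unset Strict Implicit. Unset Printing Implicit Defensive.
Import Order.TTheory GRing.Theory Num.Theory.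
Import numFieldNormedType.Exports.
Local Open Scope classical_set_scope.
Local Open Scope ring_scope.

Definition open_interval {R : realType} (I : set R) : Prop :=
  exists a b : \bar R, (a < b)%E /\ I = [set x | (a < x%:E)%E /\ (x%:E < b)%E].

Definition homeo_plus {R : realType} (I : set R) (f : R -> R) : Prop :=
  [/\ (forall x, I x -> I (f x)),
      (forall x y, I x -> I y -> x < y -> f x < f y),
      (forall y, I y -> exists2 x, I x & f x = y)
    & {within I, continuous (f : R -> R)}].

(* V is a subgroup of Homeo^+(I); elements are functions R -> R,
   and equality of homeomorphisms is equality on I. *)
Definition homeo_subgroup {R : realType} (I : set R) (V : set (R -> R)) : Prop :=
  [/\ (forall f, V f -> homeo_plus I f),
      (exists2 e, V e & forall x, I x -> e x = x),
      (forall f g, V f -> V g -> exists2 h, V h & forall x, I x -> h x = f (g x))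
    & (forall f, V f -> exists2 g, V g & forall x, I x -> g (f x) = x)].

Definition acts_freely {R : realType} (I : set R) (V : set (R -> R)) : Prop :=
  forall f, V f -> (exists x, I x /\ f x <> x) -> forall x, I x -> f x <> x.

(* Main.v *)
Require Import Defs.
From mathcomp Require Import all_boot all_order all_algebra.
From mathcomp Require Import all_classical all_reals all_analysis.
From mathcomp Require Import lra.
Set Implicit Arguments. Unset Strict Implicit. Unset Printing Implicit Defensive.
Import Order.TTheory GRing.Theory Num.Theory.
Local Open Scope classical_set_scope.
Local Open Scope ring_scope.

Definition convexI (R : realType) (I : set R) :=
  forall x y z, I x -> I y -> x <= z -> z <= y -> I z.

Lemma oi_convex (R : realType) (I : set R) : open_interval I -> convexI I.
Proof.
case=> a [b [_ ->]] x y z /= [ax xb] [ay yb] xz zy; split.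
- by apply: (lt_le_trans ax); rewrite lee_fin.
- by apply: le_lt_trans yb; rewrite lee_fin.
Qed.

Definition homeoI (R : realType) (I : set R) (f : R -> R) :=
  [/\ forall x, I x -> I (f x),
      forall x y, I x -> I y -> x < y -> f x < f y
    & forall y, I y -> exists2 x, I x & f x = y].

Lemma homeo_le (R : realType) (I : set R) f u v :
  homeoI I f -> I u -> I v -> u <= v -> f u <= f v.
Proof.
case=> _ fm _ Iu Iv; rewrite le_eqVlt => /orP[/eqP->//|uv].
exact/ltW/fm.
Qed.

Lemma homeo_refl (R : realType) (I : set R) f u v :
  homeoI I f -> I u -> I v -> f u < f v -> u < v.
Proof.
move=> hf Iu Iv fuv; rewrite ltNge; apply/negP => vu.
by have := homeo_le hf Iv Iu vu; rewrite leNgt fuv.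
Qed.

Lemma nosign (R : realType) (I : set R) f x y :
  convexI I -> homeoI I f -> (forall z, I z -> f z <> z) ->
  I x -> I y -> x < y -> f x < x -> y < f y -> False.
Proof.
move=> cI hf ff Ix Iy xy fxx yfy.
have [fI fm fs] := hf.
pose A := [set z | x <= z <= y /\ f z < z].
have Ax : A x by split => //; rewrite lexx (ltW xy).
have hsA : has_sup A.
  by split; [exists x | exists y => z [/andP[_ ->]]].
set s := sup A.
have xs : x <= s := sup_upper_bound hsA Ax.
have sy : s <= y by apply: ge_sup; [exists x | move=> z [/andP[_ ->]]].
have Is : I s := cI x y s Ix Iy xs sy.
case: (ltgtP (f s) s) => [fss|sfs|fss]; last by apply: (ff s Is).
- have sy' : s < y.
    rewrite lt_neqAle sy andbT; apply/eqP=> esy.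
    by move: fss; rewrite esy => /lt_trans /(_ yfy); rewrite ltxx.
  have [w Iw fw] := fs s Is.
  have sw : s < w.
    rewrite ltNge; apply/negP => ws.
    have := homeo_le hf Iw Is ws; rewrite fw => h.
    by have := lt_le_trans fss h; rewrite ltxx.
  have [z [sz zy zw]] : exists z, [/\ s < z, z <= y & z <= w].
    case: (leP w y) => wy; first by exists w.
    by exists y; split => //; apply: ltW.
  have Iz : I z by apply: (cI x y) => //; apply: le_trans xs (ltW sz).
  have nAz : ~ A z.
    move=> Az; have := sup_upper_bound hsA Az; rewrite -/s => zs.
    by have := lt_le_trans sz zs; rewrite ltxx.
  have zfz : z <= f z.
    rewrite leNgt; apply/negP => fzz; apply: nAz; split => //.
    by rewrite zy andbT; apply: le_trans xs (ltW sz).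
  have := homeo_le hf Iz Iw zw; rewrite fw => fzs.
  have := le_trans zfz fzs => zs.
  by have := lt_le_trans sz zs; rewrite ltxx.
- have [w Iw fw] := fs s Is.
  have ws : w < s.
    rewrite ltNge; apply/negP => sw.
    have := homeo_le hf Is Iw sw; rewrite fw => h.
    by have := lt_le_trans sfs h; rewrite ltxx.
  have [z [/andP[xz zy] fzz] wz] : exists2 z, A z & w < z.
    have e0 : 0 < s - w by rewrite subr_gt0.
    have [z Az hz] := sup_adherent e0 hsA.
    by exists z => //; move: hz; rewrite -/s opprB addrCA subrr addr0.
  have Iz : I z := cI x y z Ix Iy xz zy.
  have zs : z <= s := sup_upper_bound hsA (conj (introT andP (conj xz zy)) fzz).
  have := fm w z Iw Iz wz; rewrite fw => sfz.
  have := lt_trans sfz fzz => sz.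
  by have := lt_le_trans sz zs; rewrite ltxx.
Qed.

Definition Gp (R : realType) (I : set R) (V : set (R -> R)) (f : R -> R) :=
  (forall x, ~ I x -> f x = x) /\ exists2 h, V h & forall x, I x -> f x = h x.

Definition rI (R : realType) (I : set R) (h : R -> R) :=
  fun x => if `[< I x >] then h x else x.

Lemma Gp_rI (R : realType) (I : set R) (V : set (R -> R)) h :
  V h -> Gp I V (rI I h).
Proof.
move=> Vh; split; first by move=> x Ix; rewrite /rI asboolF.
by exists h => // x Ix; rewrite /rI asboolT.
Qed.

Lemma rI_eq (R : realType) (I : set R) h x : I x -> rI I h x = h x.
Proof. by move=> Ix; rewrite /rI asboolT. Qed.

Lemma Gp_homeo (R : realType) (I : set R) (V : set (R -> R)) f :
  homeo_subgroup I V -> Gp I V f -> homeoI I f.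
Proof.
move=> [HV _ _ _] [_ [h Vh fh]]; have [h1 h2 h3 _] := HV h Vh; split.
- by move=> x Ix; rewrite fh //; exact: h1.
- by move=> x y Ix Iy xy; rewrite !fh //; exact: h2.
- by move=> y Iy; have [x Ix hx] := h3 y Iy; exists x => //; rewrite fh.
Qed.

Lemma Gp_id (R : realType) (I : set R) (V : set (R -> R)) :
  homeo_subgroup I V -> Gp I V id.
Proof. by case=> _ [e Ve eid] _ _; split => //; exists e => // x Ix; rewrite eid. Qed.

Lemma Gp_comp (R : realType) (I : set R) (V : set (R -> R)) f g :
  homeo_subgroup I V -> Gp I V f -> Gp I V g -> Gp I V (f \o g).
Proof.
move=> HS Gf Gg; have [_ _ Hc _] := HS.
have [g1 _] := Gg; have [f1 [hf Vf fh]] := Gf; have [_ [hg Vg gh]] := Gg.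
have [gI _ _] := Gp_homeo HS Gg.
split; first by move=> x Ix /=; rewrite g1 // f1.
have [k Vk kh] := Hc hf hg Vf Vg.
by exists k => // x Ix /=; rewrite kh // -gh // fh //; apply: gI.
Qed.

Lemma Gp_iter (R : realType) (I : set R) (V : set (R -> R)) f n :
  homeo_subgroup I V -> Gp I V f -> Gp I V (iter n f).
Proof.
move=> HS Gf; elim: n => [|n IH]; first exact: Gp_id.
exact: (Gp_comp HS Gf IH).
Qed.

Lemma Gp_inv (R : realType) (I : set R) (V : set (R -> R)) f :
  homeo_subgroup I V -> Gp I V f ->
  exists2 g, Gp I V g & (forall x, g (f x) = x) /\ (forall x, f (g x) = x).
Proof.
move=> HS Gf; have [_ _ _ Hi] := HS; have [f1 [hf Vf fh]] := Gf.
have [fI _ fs] := Gp_homeo HS Gf.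
have [g0 Vg0 g0h] := Hi hf Vf.
have L : forall x, rI I g0 (f x) = x.
  move=> x; case: (pselect (I x)) => Ix.
    by rewrite rI_eq ?fh ?g0h //; rewrite -fh //; apply: fI.
  by rewrite f1 // /rI asboolF.
exists (rI I g0); first exact: Gp_rI.
split => // y; case: (pselect (I y)) => Iy.
  by have [w Iw <-] := fs y Iy; rewrite L.
by rewrite /rI asboolF // f1.
Qed.

Lemma Gp_free (R : realType) (I : set R) (V : set (R -> R)) f :
  acts_freely I V -> Gp I V f -> f = id \/ forall x, I x -> f x <> x.
Proof.
move=> HF [f1 [h Vh fh]].
case: (pselect (exists x, I x /\ f x <> x)) => [[x [Ix fx]]|H].
  right => y Iy; rewrite fh //; apply: (HF h Vh) => //.
  by exists x; split => //; rewrite -fh.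
left; apply: funext => x; case: (pselect (I x)) => Ix; last by rewrite f1.
by apply: contrapT => ne; apply: H; exists x.
Qed.

Definition Ctx (R : realType) (I : set R) (V : set (R -> R)) :=
  [/\ open_interval I, homeo_subgroup I V & acts_freely I V].

Definition ltI (R : realType) (I : set R) (f g : R -> R) := forall x, I x -> f x < g x.
Definition leI (R : realType) (I : set R) (f g : R -> R) := forall x, I x -> f x <= g x.

Lemma Gp_sign (R : realType) (I : set R) (V : set (R -> R)) f :
  Ctx I V -> Gp I V f -> f = id \/ ltI I id f \/ ltI I f id.
Proof.
move=> [HI HS HF] Gf; have cI := oi_convex HI.
have hf := Gp_homeo HS Gf; have [fI fm _] := hf.
case: (Gp_free HF Gf) => [->|ff]; [by left | right].
case: (pselect (exists x, I x /\ f x < x)) => [[x [Ix fxx]]|H]; last first.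
  left => y Iy /=; case: (ltgtP (f y) y) => // [fy|fy].
    by exfalso; apply: H; exists y.
  by exfalso; apply: (ff y Iy).
right => y Iy /=; case: (ltgtP (f y) y) => // [yf|fy]; last by exfalso; apply: (ff y Iy).
exfalso; case: (ltgtP x y) => [xy|yx|exy].
- exact: (nosign cI hf ff Ix Iy xy fxx yf).
- have [g Gg [gf fg]] := Gp_inv HS Gf.
  have hg := Gp_homeo HS Gg.
  have gfree : forall z, I z -> g z <> z.
    by move=> z Iz gz; apply: (ff z Iz); rewrite -{1}gz fg.
  apply: (nosign cI hg gfree (fI y Iy) (fI x Ix) (fm _ _ Iy Ix yx)).
  + by rewrite gf.
  + by rewrite gf.
- by move: fxx; rewrite exy => /lt_trans /(_ yf); rewrite ltxx.
Qed.

Lemma Gp_tri (R : realType) (I : set R) (V : set (R -> R)) f g :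
  Ctx I V -> Gp I V f -> Gp I V g -> f = g \/ ltI I f g \/ ltI I g f.
Proof.
move=> HC Gf Gg; have [_ HS _] := HC.
have [gi Ggi [gig ggi]] := Gp_inv HS Gg.
have [fI _ _] := Gp_homeo HS Gf.
have hg := Gp_homeo HS Gg; have [_ gm _] := hg.
have [giI _ _] := Gp_homeo HS Ggi.
case: (Gp_sign HC (Gp_comp HS Ggi Gf)) => [E|[P|N]].
- left; apply: funext => x; have := congr1 (fun k => g (k x)) E.
  by rewrite /= ggi.
- right; right => x Ix; have := gm _ _ Ix (giI _ (fI _ Ix)) (P x Ix).
  by rewrite /= ggi.
- right; left => x Ix; have := gm _ _ (giI _ (fI _ Ix)) Ix (N x Ix).
  by rewrite /= ggi.
Qed.

Lemma iter_I (R : realType) (I : set R) f n x :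
  homeoI I f -> I x -> I (iter n f x).
Proof. by case=> fI _ _ Ix; elim: n => //= n IH; apply: fI. Qed.

Lemma orbit_unb (R : realType) (I : set R) (V : set (R -> R)) a x0 y :
  Ctx I V -> Gp I V a -> ltI I id a -> I x0 -> I y ->
  exists n, y < iter n a x0.
Proof.
move=> [HI HS _] Ga pa Ix0 Iy; have cI := oi_convex HI.
have ha := Gp_homeo HS Ga; have [aI am as_] := ha.
apply: contrapT => H.
have Hn : forall n, iter n a x0 <= y.
  by move=> n; rewrite leNgt; apply/negP => h; apply: H; exists n.
pose A := [set z | exists n, z = iter n a x0].
have hsA : has_sup A.
  by split; [exists x0; exists 0%N | exists y => z [n ->]].
set L := sup A.
have x0L : x0 <= L by apply: sup_upper_bound => //; exists 0%N.
have Ly : L <= y by apply: ge_sup; [exists x0; exists 0%N | move=> z [n ->]].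
have IL : I L := cI _ _ _ Ix0 Iy x0L Ly.
have [w Iw aw] := as_ L IL.
have wL : w < L.
  apply: (homeo_refl ha Iw IL); rewrite aw; exact: (pa L IL).
have e0 : 0 < L - w by rewrite subr_gt0.
have [z [n ->] hz] := sup_adherent e0 hsA.
move: hz; rewrite -/L opprB addrCA subrr addr0 => wz.
have := am _ _ Iw (iter_I n ha Ix0) wz; rewrite aw => Lz.
have : A (iter n.+1 a x0) by exists n.+1.
move/(sup_upper_bound hsA); rewrite -/L => zL.
by have := lt_le_trans Lz zL; rewrite ltxx.
Qed.

Lemma archi (R : realType) (I : set R) (V : set (R -> R)) a b x0 :
  Ctx I V -> I x0 -> Gp I V a -> ltI I id a -> Gp I V b ->
  exists n, ltI I b (iter n a).
Proof.
move=> HC Ix0 Ga pa Gb; have [_ HS _] := HC.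
have [bI _ _] := Gp_homeo HS Gb.
have [n hn] := orbit_unb HC Ga pa Ix0 (bI _ Ix0).
exists n; case: (Gp_tri HC Gb (Gp_iter n HS Ga)) => [E|[//|N]].
  by move: hn; rewrite E ltxx.
by have := N x0 Ix0; rewrite ltNge (ltW hn).
Qed.

Lemma floorG (R : realType) (I : set R) (V : set (R -> R)) d a x0 :
  Ctx I V -> I x0 -> Gp I V d -> ltI I id d -> Gp I V a -> ltI I id a ->
  exists m, leI I (iter m d) a /\ ltI I a (iter m.+1 d).
Proof.
move=> HC Ix0 Gd pd Ga pa; have [_ HS _] := HC.
have [N HN] := archi HC Ix0 Gd pd Ga.
have exP : exists n, `[< ltI I a (iter n d) >] by exists N; apply: asboolT.
case: (ex_minnP exP) => N0 /asboolP HN0 Hmin.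
case: N0 HN0 Hmin => [|m] HN0 Hmin.
  by have := HN0 x0 Ix0; have := pa x0 Ix0; move=> /= h1 h2; have := lt_trans h1 h2; rewrite ltxx.
exists m; split => //.
case: (Gp_tri HC (Gp_iter m HS Gd) Ga) => [E|[L|L]].
- by rewrite E => x Ix.
- by move=> x Ix; apply: ltW; apply: L.
- have := Hmin m (asboolT L); by rewrite ltnn.
Qed.

Lemma iter_cancel (T : Type) (e ei : T -> T) m y :
  (forall x, e (ei x) = x) -> iter m e (iter m ei y) = y.
Proof.
move=> H; elim: m => // m IH.
by rewrite iterSr /= H.
Qed.

Lemma least_power (R : realType) (I : set R) (V : set (R -> R)) e g x0 :
  Ctx I V -> I x0 -> Gp I V e -> ltI I id e ->
  (forall h, Gp I V h -> ltI I id h -> leI I e h) ->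
  Gp I V g -> ltI I id g -> exists m, g = iter m e.
Proof.
move=> HC Ix0 Ge pe least Gg pg; have [_ HS _] := HC.
have [m [le1 lt1]] := floorG HC Ix0 Ge pe Gg pg.
exists m.
case: (Gp_tri HC (Gp_iter m HS Ge) Gg) => [//|[L|L]]; last first.
  by have := le1 x0 Ix0; rewrite leNgt L.
exfalso.
have [ei Gei [eie eei]] := Gp_inv HS Ge.
have Gh := Gp_comp HS (Gp_iter m HS Gei) Gg.
have hem := Gp_homeo HS (Gp_iter m HS Ge).
have [gI _ _] := Gp_homeo HS Gg.
have heim := Gp_homeo HS (Gp_iter m HS Gei).
have [eimI _ _] := heim.
have [eI _ _] := Gp_homeo HS Ge.
have ph : ltI I id (iter m ei \o g).
  move=> x Ix; change (x < iter m ei (g x)); apply: (homeo_refl hem Ix (eimI _ (gI _ Ix))).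
  by rewrite iter_cancel //; apply: L.
move: (least _ Gh ph x0 Ix0) => /= h.
have := homeo_le hem (eI _ Ix0) (eimI _ (gI _ Ix0)) h.
rewrite iter_cancel // -iterSr => h2.
by have := lt1 x0 Ix0; rewrite ltNge h2.
Qed.

Lemma holder0 (R : realType) (I : set R) (V : set (R -> R)) a b x0 :
  Ctx I V -> I x0 -> Gp I V a -> ltI I id a -> Gp I V b -> ltI I id b ->
  ltI I (b \o a) (a \o b) -> False.
Proof.
move=> HC Ix0 Ga pa Gb pb lcd; have [_ HS _] := HC.
have Gc := Gp_comp HS Gb Ga; have Gd := Gp_comp HS Ga Gb.
have [ci Gci [cic cci]] := Gp_inv HS Gc.
have Ge := Gp_comp HS Gd Gci.
have [ciI _ _] := Gp_homeo HS Gci.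
have [aI _ _] := Gp_homeo HS Ga; have [bI _ _] := Gp_homeo HS Gb.
have pe : ltI I id (a \o b \o ci).
  move=> x Ix; have := lcd _ (ciI _ Ix); rewrite /= -/(comp b a (ci x)).
  by rewrite -/(comp b a (ci x)) cci.
have caseA : forall dl, Gp I V dl -> ltI I id dl ->
    (forall x, I x -> dl (dl x) <= (a \o b \o ci) x) -> False.
  move=> dl Gdl pdl hdl.
  have hdl' := Gp_homeo HS Gdl; have [dlI _ _] := hdl'.
  have [m [lem ltm]] := floorG HC Ix0 Gdl pdl Ga pa.
  have [n [len ltn]] := floorG HC Ix0 Gdl pdl Gb pb.
  have hm1 := Gp_homeo HS (Gp_iter m.+1 HS Gdl).
  have hn := Gp_homeo HS (Gp_iter n HS Gdl).
  have hm := Gp_homeo HS (Gp_iter m HS Gdl).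
  have hb := Gp_homeo HS Gb.
  have s1 := ltm _ (bI _ Ix0).
  have s2 := homeo_le hm1 (bI _ Ix0) (iter_I n.+1 hdl' Ix0) (ltW (ltn _ Ix0)).
  have E1 : iter m.+1 dl (iter n.+1 dl x0) = dl (dl (iter n dl (iter m dl x0))).
    by rewrite -iterD addSn addnS !iterS addnC iterD.
  have s3 := homeo_le hn (iter_I m hdl' Ix0) (aI _ Ix0) (lem _ Ix0).
  have s4 := len _ (aI _ Ix0).
  have s5 := le_trans s3 s4.
  have Iba : I (b (a x0)) := bI _ (aI _ Ix0).
  have s6 := homeo_le hdl' (iter_I n hdl' (iter_I m hdl' Ix0)) Iba s5.
  have s7 := homeo_le hdl' (dlI _ (iter_I n hdl' (iter_I m hdl' Ix0))) (dlI _ Iba) s6.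
  have s8 := hdl _ Iba.
  have E2 : (a \o b \o ci) (b (a x0)) = a (b x0).
    by rewrite /= -/(comp b a x0) cic.
  move: s8; rewrite E2 => s8.
  rewrite E1 in s2.
  have := lt_le_trans s1 (le_trans s2 (le_trans s7 s8)).
  by rewrite ltxx.
have least : forall h, Gp I V h -> ltI I id h -> leI I (a \o b \o ci) h.
  move=> g Gg pg.
  case: (Gp_tri HC Ge Gg) => [->|[L|L]].
  - by move=> x Ix.
  - by move=> x Ix; apply: ltW; apply: L.
  exfalso.
  have hg := Gp_homeo HS Gg; have [gI gm _] := hg.
  case: (Gp_tri HC (Gp_comp HS Gg Gg) Ge) => [E|[L2|L2]].
  - apply: (caseA g Gg pg) => x Ix; by rewrite -E.
  - by apply: (caseA g Gg pg) => x Ix; apply: ltW; apply: (L2 x Ix).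
  have [gi Ggi [gig ggi]] := Gp_inv HS Gg.
  have hgi := Gp_homeo HS Ggi; have [giI gim _] := hgi.
  have he := Gp_homeo HS Ge; have [eI em _] := he.
  apply: (caseA _ (Gp_comp HS Ge Ggi)).
  - move=> x Ix; have := L _ (giI _ Ix); rewrite ggi => h; exact: h.
  - move=> x Ix; apply: ltW.
    have dlt : forall y, I y -> (a \o b \o ci \o gi) y < g y.
      move=> y Iy; have := L2 _ (giI _ Iy); rewrite /= ggi.
      by rewrite -/(comp (a \o b \o ci) gi y).
    have Id : I ((a \o b \o ci \o gi) x) by apply: eI; apply: giI.
    have := gim _ _ Id (gI _ Ix) (dlt x Ix); rewrite gig => h.
    have := em _ _ (giI _ Id) Ix h.
    by rewrite -/(comp (a \o b \o ci) gi ((a \o b \o ci \o gi) x)).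
set e := a \o b \o ci in Ge pe least.
have [i Ei] := least_power HC Ix0 Ge pe least Ga pa.
have [j Ej] := least_power HC Ix0 Ge pe least Gb pb.
have := lcd x0 Ix0; rewrite /= Ei Ej -!iterD addnC ltxx //.
Qed.

Lemma comm_pos (R : realType) (I : set R) (V : set (R -> R)) a b x0 :
  Ctx I V -> I x0 -> Gp I V a -> ltI I id a -> Gp I V b -> ltI I id b ->
  forall x, a (b x) = b (a x).
Proof.
move=> HC Ix0 Ga pa Gb pb; have [_ HS _] := HC.
case: (Gp_tri HC (Gp_comp HS Ga Gb) (Gp_comp HS Gb Ga)) => [E|[L|L]].
- by move=> x; have := congr1 (fun k => k x) E.
- by exfalso; apply: (holder0 HC Ix0 Gb pb Ga pa L).
- by exfalso; apply: (holder0 HC Ix0 Ga pa Gb pb L).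
Qed.


Lemma inv_trick (T : Type) (a ai b : T -> T) :
  (forall x, ai (a x) = x) -> (forall x, a (ai x) = x) ->
  (forall x, ai (b x) = b (ai x)) ->
  forall x, a (b x) = b (a x).
Proof.
move=> aia aai H x; have := H (a x); rewrite aia => h.
by rewrite -h aai.
Qed.

Lemma neg_inv (R : realType) (I : set R) (V : set (R -> R)) a ai :
  homeo_subgroup I V -> Gp I V ai -> (forall x, a (ai x) = x) ->
  ltI I a id -> ltI I id ai.
Proof.
move=> HS Gai aai N x Ix; have [aiI _ _] := Gp_homeo HS Gai.
by have := N _ (aiI _ Ix); rewrite /= aai.
Qed.

Lemma comm_posl (R : realType) (I : set R) (V : set (R -> R)) a b x0 :
  Ctx I V -> I x0 -> Gp I V a -> ltI I id a -> Gp I V b ->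
  forall x, a (b x) = b (a x).
Proof.
move=> HC Ix0 Ga pa Gb; have [_ HS _] := HC.
case: (Gp_sign HC Gb) => [->//|[P|N]]; first exact: (comm_pos HC Ix0 Ga pa Gb P).
have [bi Gbi [bib bbi]] := Gp_inv HS Gb.
have pbi := neg_inv HS Gbi bbi N.
have H := comm_pos HC Ix0 Ga pa Gbi pbi.
move=> x; symmetry; apply: (inv_trick bib bbi) => y; by rewrite H.
Qed.

Lemma comm_all (R : realType) (I : set R) (V : set (R -> R)) a b x0 :
  Ctx I V -> I x0 -> Gp I V a -> Gp I V b ->
  forall x, a (b x) = b (a x).
Proof.
move=> HC Ix0 Ga Gb; have [_ HS _] := HC.
case: (Gp_sign HC Ga) => [->//|[P|N]]; first exact: (comm_posl HC Ix0 Ga P Gb).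
have [ai Gai [aia aai]] := Gp_inv HS Ga.
have pai := neg_inv HS Gai aai N.
have H := comm_posl HC Ix0 Gai pai Gb.
exact: (inv_trick aia aai H).
Qed.

Lemma inf_lt (R : realType) (I : set R) z :
  open_interval I -> I z -> (ereal_inf [set y%:E | y in I] < z%:E)%E.
Proof.
case=> a [b [ab EI]] Iz; have Iz' := Iz; rewrite EI /= in Iz'.
case: Iz' => az zb.
have [y [Iy yz]] : exists y, I y /\ y < z.
  case: a az ab EI => [r| |] az ab EI; last first.
  - exists (z - 1); split; last by lra.
    rewrite EI /=; split; first exact: ltNyr.
    by apply: le_lt_trans zb; rewrite lee_fin; lra.
  - by move: az; rewrite ltNge leey.
  - rewrite lte_fin in az.
    exists ((r + z) / 2); split; last by lra.
    rewrite EI /=; split; first by rewrite lte_fin; lra.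
    by apply: le_lt_trans zb; rewrite lee_fin; lra.
apply: (le_lt_trans (ereal_inf_lbound _)); first by exists y.
by rewrite lte_fin.
Qed.

Theorem lemma3p2 (R : realType) (I : set R) (S : Type) (V : set (R -> R))
  (F : R -> S) (psi : R -> R) :
  open_interval I ->
  inhabited S ->
  homeo_subgroup I V ->
  acts_freely I V ->
  V psi -> (exists x, I x /\ psi x <> x) ->
  (forall x, I x -> F x = F (psi x)) ->
  forall phi, V phi ->
  (exists t, I t /\
     forall x, (ereal_inf [set y%:E | y in I] < x%:E)%E -> x < t -> F x = F (phi x)) ->
  forall x, I x -> F x = F (phi x).
Proof.
move=> HI _ HS HF Vpsi [x1 [Ix1 px1]] Fpsi phi Vphi [t [It Ht]] x Ix.
have HC : Ctx I V by split.
have Gp0 := Gp_rI I Vpsi.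
have [p [Gpp pp Fp]] : exists p, [/\ Gp I V p, ltI I id p & forall z, I z -> F (p z) = F z].
  case: (Gp_sign HC Gp0) => [E|[P|N]].
  - exfalso; apply: px1; have := congr1 (fun k => k x1) E.
    by rewrite /= rI_eq.
  - exists (rI I psi); split => // z Iz; by rewrite rI_eq // -Fpsi.
  - have [pi Gpi [pip ppi]] := Gp_inv HS Gp0.
    have [piI _ _] := Gp_homeo HS Gpi.
    exists pi; split => //; first exact: (neg_inv HS Gpi ppi N).
    move=> z Iz; rewrite (Fpsi (pi z) (piI _ Iz)).
    by rewrite -(@rI_eq _ I psi _ (piI _ Iz)) ppi.
have Gq := Gp_rI I Vphi.
have comm := comm_all HC Ix Gpp Gq.
have hp := Gp_homeo HS Gpp; have [pI _ _] := hp.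
have [qI _ _] := Gp_homeo HS Gq.
have Fq : forall z, I z -> F (rI I phi (p z)) = F (rI I phi z).
  by move=> z Iz; rewrite -comm Fp //; apply: qI.
have iterF : forall n z, I z -> F (iter n p z) = F z.
  by move=> n z Iz; elim: n => //= n IH; rewrite Fp ?IH //; exact: (iter_I n hp Iz).
have iterFq : forall n z, I z -> F (rI I phi (iter n p z)) = F (rI I phi z).
  by move=> n z Iz; elim: n => //= n IH; rewrite Fq ?IH //; exact: (iter_I n hp Iz).
have [n hn] := orbit_unb HC Gpp pp It Ix.
have [pi Gpi [pip ppi]] := Gp_inv HS Gpp.
have hpi := Gp_homeo HS Gpi.
have [z [Iz Ex zt]] : exists z, [/\ I z, iter n p z = x & z < t].
  exists (iter n pi x); split; first exact: iter_I.
    exact: iter_cancel.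
  apply: (homeo_refl (Gp_homeo HS (Gp_iter n HS Gpp)) (iter_I n hpi Ix) It).
  by rewrite iter_cancel.
have e1 : F x = F z by rewrite -Ex iterF.
have e2 : F z = F (rI I phi z) by rewrite rI_eq // Ht // (inf_lt HI Iz).
have e3 : F (rI I phi z) = F (rI I phi x) by rewrite -Ex iterFq.
by rewrite e1 e2 e3 rI_eq.
Qed.
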